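(* Let $\langle a\rangle$ and $\langle b\rangle$ be cyclic groups of orders $2^{\alpha}$ and $2^{\beta}$ respectively, with $\alpha\geq\beta\geq 1$, let $G=\langle a\rangle\amalg^{\mathfrak{N}_3}\langle b\rangle$ be their $3$-nilpotent product, let $\gamma$ be an integer with $1\leq\gamma<\beta$, let $N$ be the subgroup of $G$ generated by $[a,b,a]^{2^{\gamma}}$ and $[a,b,b]^{2^{\gamma}}$, and let $K=G/N$. Then $Z(K)$ is generated by (the images of) $a^{2^{\beta}}$, $[a,b]^{2^{\gamma}}$, $[a,b,a]$ and $[a,b,b]$. Consequently $$K/Z(K)\cong\Bigl\langle x,y\,\Bigm|\, x^{2^{\beta}}=y^{2^{\beta}}=[x,y]^{2^{\gamma}}=[x,y,x]=[x,y,y]=e\Bigr\rangle.$$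
   Context: For cyclic groups $A_1,A_2$, their $3$-nilpotent product $A_1\amalg^{\mathfrak{N}_3}A_2$ is $F/F_4$, where $F=A_1*A_2$ is the free product and $F_4$ is the fourth term of the lower central series of $F$. Commutators are $[x,y]=x^{-1}y^{-1}xy$, left-normed: $[x,y,z]=[[x,y],z]$. *)

(* Defs.v *)
From mathcomp Require Import all_boot all_fingroup all_solvable.
Set Implicit Arguments.
Unset Strict Implicit.
Unset Printing Implicit Defensive.
Local Open Scope group_scope.

(* [nil3_product G a b m n] : G (with distinguished elements a, b) is the
   3-nilpotent product <a> amalg^{N_3} <b> of cyclic groups of orders m, n,
   i.e. F/F_4 with F = C_m * C_n, characterised by its universal property:
   G is generated by a, b, a^m = b^n = 1, G has class <= 3 ('L_4(G) = 1, where
   'L_1 = G, 'L_(k+1) = [~: 'L_k, G]), and for every (finite) group in which two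
   elements x, y with x^m = y^n = 1 generate a subgroup of class <= 3, there is a
   homomorphism G -> that group sending a |-> x, b |-> y. *)
Definition nil3_product (gT : finGroupType) (G : {group gT}) (a b : gT)
  (m n : nat) : Prop :=
  [/\ G :=: <<[set a; b]>>, a ^+ m = 1, b ^+ n = 1, 'L_4(G) = 1 &
   forall (hT : finGroupType) (x y : hT),
     'L_4(<<[set x; y]>>) = 1 -> x ^+ m = 1 -> y ^+ n = 1 ->
     exists f : {morphism G >-> hT}, f a = x /\ f b = y].

(* Main.v *)
Require Import Defs.
From HB Require Import structures.
From mathcomp Require Import all_boot all_fingroup all_solvable.
From mathcomp Require Import ssralg finalg zmodp ring.
Set Implicit Arguments.
Unset Strict Implicit.
Unset Printing Implicit Defensive.

Section Model.
Variable R : finComNzRingType.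
Local Open Scope ring_scope.

Record ut := UT { u12 : R; u13 : R; u14 : R; u23 : R; u24 : R; u34 : R }.
Definition ut_enc p := (u12 p, u13 p, u14 p, u23 p, u24 p, u34 p).
Definition ut_dec (t : R * R * R * R * R * R) :=
  let: (a, b, c, d, e, f) := t in UT a b c d e f.
Lemma ut_encK : cancel ut_enc ut_dec. Proof. by case. Qed.
HB.instance Definition _ := Finite.copy ut (can_type ut_encK).

Definition ut_mul (p q : ut) : ut :=
  UT (u12 p + u12 q) (u13 p + u12 p * u23 q + u13 q)
     (u14 p + u12 p * u24 q + u13 p * u34 q + u14 q)
     (u23 p + u23 q) (u24 p + u23 p * u34 q + u24 q) (u34 p + u34 q).
Definition ut_one := UT 0 0 0 0 0 0.
Definition ut_inv (p : ut) : ut :=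
  UT (- u12 p) (- u13 p + u12 p * u23 p)
     (- u14 p + u12 p * u24 p + u13 p * u34 p - u12 p * u23 p * u34 p)
     (- u23 p) (- u24 p + u23 p * u34 p) (- u34 p).

Lemma ut_mulA : associative ut_mul.
Proof. by case=> ? ? ? ? ? ?; case=> ? ? ? ? ? ?; case=> ? ? ? ? ? ?;
  rewrite /ut_mul /=; congr UT; ring. Qed.
Lemma ut_mul1 : left_id ut_one ut_mul.
Proof. by case=> ? ? ? ? ? ?; rewrite /ut_mul /=; congr UT; ring. Qed.
Lemma ut_mulV : left_inverse ut_one ut_inv ut_mul.
Proof. by case=> ? ? ? ? ? ?; rewrite /ut_mul /=; congr UT; ring. Qed.

HB.instance Definition _ := Finite_isGroup.Build ut ut_mulA ut_mul1 ut_mulV.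

Lemma utM (p q : ut) : (p * q)%g = ut_mul p q. Proof. by []. Qed.
Lemma utV (p : ut) : (p^-1)%g = ut_inv p. Proof. by []. Qed.
Lemma ut1 : (1%g : ut) = ut_one. Proof. by []. Qed.

End Model.

Import GRing.Theory.

Section ModelFacts.
Variable R : finComNzRingType.
Local Open Scope group_scope.
Local Open Scope ring_scope.
Local Notation ut := (ut R).

Definition D2 := [set p : ut | [&& u12 p == 0, u23 p == 0 & u34 p == 0]].
Definition D3 := [set p : ut | [&& p \in D2, u13 p == 0 & u24 p == 0]].

Lemma D2_group_set : group_set D2.
Proof.
apply/group_setP; split; first by rewrite inE /= !eqxx.
case=> ? ? ? ? ? ?; case=> ? ? ? ? ? ?; rewrite !inE /= => /and3P[/eqP-> /eqP-> /eqP->].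
by case/and3P=> /eqP-> /eqP-> /eqP->; rewrite !addr0 !eqxx.
Qed.
Canonical D2G := Group D2_group_set.

Lemma D3_group_set : group_set D3.
Proof.
apply/group_setP; split; first by rewrite !inE /= !eqxx.
case=> ? ? ? ? ? ?; case=> ? ? ? ? ? ?; rewrite !inE /=.
case/and3P=> /and3P[/eqP-> /eqP-> /eqP->] /eqP-> /eqP->.
by case/and3P=> /and3P[/eqP-> /eqP-> /eqP->] /eqP-> /eqP->; rewrite !mul0r !addr0 !eqxx.
Qed.
Canonical D3G := Group D3_group_set.

Lemma comm_D2 (p q : ut) : [~ p, q]%g \in D2.
Proof.
case: p => ? ? ? ? ? ?; case: q => ? ? ? ? ? ?.
rewrite inE /commg /conjg !utM !utV /ut_mul /ut_inv /=.
by apply/and3P; split; apply/eqP; ring.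
Qed.

Lemma comm_D3 (p q : ut) : p \in D2 -> [~ p, q]%g \in D3.
Proof.
case: p => ? ? ? ? ? ?; case: q => ? ? ? ? ? ?.
rewrite !inE /= => /and3P[/eqP-> /eqP-> /eqP->].

by apply/and3P; split; [apply/and3P; split|..]; apply/eqP; ring.
Qed.

Lemma comm_1 (p q : ut) : p \in D3 -> [~ p, q]%g = 1%g.
Proof.
case: p => ? ? ? ? ? ?; case: q => ? ? ? ? ? ?.
rewrite !inE /= => /and3P[/and3P[/eqP-> /eqP-> /eqP->] /eqP-> /eqP->].
rewrite /commg /conjg !utM !utV ut1 /ut_mul /ut_inv /ut_one /=.
congr UT; ring.
Qed.

Lemma ut_L2 (H : {group ut}) : 'L_2(H) \subset D2G.
Proof.
rewrite lcnSn /commutator gen_subG; apply/subsetP=> _ /imset2P[x y _ _ ->]; exact: comm_D2.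
Qed.

Lemma ut_L3 (H : {group ut}) : 'L_3(H) \subset D3G.
Proof.
rewrite lcnSn /commutator gen_subG; apply/subsetP=> _ /imset2P[x y Lx _ ->].
by apply: comm_D3; apply: (subsetP (ut_L2 H)).
Qed.

Lemma ut_L4 (H : {group ut}) : 'L_4(H) = 1%g.
Proof.
rewrite lcnSn; apply/trivgP; rewrite /commutator gen_subG; apply/subsetP=> _ /imset2P[x y Lx _ ->].
by rewrite comm_1 ?group1 //; apply: (subsetP (ut_L3 H)).
Qed.

Lemma ut_expg (p : ut) n : p \in D3 -> (p ^+ n)%g = UT 0 0 (n%:R * u14 p) 0 0 0.
Proof.
case: p => ? ? c ? ? ?; rewrite !inE /= => /and3P[/and3P[/eqP-> /eqP-> /eqP->] /eqP-> /eqP->].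
elim: n => [|n IH]; first by rewrite expg0 ut1 /ut_one; congr UT; ring.
by rewrite expgS IH utM /ut_mul /=; congr UT; rewrite ?mulrS; ring.
Qed.

Lemma ut_commE (p q : ut) :
  [~ p, q]%g = ut_mul (ut_inv p) (ut_mul (ut_inv q) (ut_mul p q)).
Proof. by []. Qed.

Lemma ut_mulE (a b c d e f a' b' c' d' e' f' : R) :
  ut_mul (UT a b c d e f) (UT a' b' c' d' e' f') =
  UT (a + a') (b + a * d' + b') (c + a * e' + b * f' + c') (d + d') (e + d * f' + e') (f + f').
Proof. by []. Qed.
Lemma ut_invE (a b c d e f : R) :
  ut_inv (UT a b c d e f) = UT (- a) (- b + a * d) (- c + a * e + b * f - a * d * f) (- d) (- e + d * f) (- f).
Proof. by []. Qed.

Ltac utsimpl := repeat (first [rewrite ut_mulE | rewrite ut_invE]; cbn [u12 u13 u14 u23 u24 u34];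
  rewrite ?mulr0 ?mul0r ?addr0 ?add0r ?mulr1 ?mul1r ?oppr0 ?subr0 ?opprK ?addNr ?addrN ?mulN1r ?mulrN1 ?mulrN ?mulNr ?subrr).

Definition X1 : ut := UT 1 0 0 0 0 0.
Definition Y1 : ut := UT 0 0 0 1 0 0.
Definition X2 : ut := UT 1 0 0 1 0 0.
Definition Y2 : ut := UT 0 0 0 0 0 1.

Lemma X1_exp n : (X1 ^+ n)%g = UT n%:R 0 0 0 0 0.
Proof.
elim: n => [|n IH]; first by rewrite expg0 ut1 /ut_one; congr UT; ring.
by rewrite expgS IH utM /ut_mul /=; congr UT; rewrite ?mulrS; ring.
Qed.

Lemma Y1_exp n : (Y1 ^+ n)%g = UT 0 0 0 n%:R 0 0.
Proof.
elim: n => [|n IH]; first by rewrite expg0 ut1 /ut_one; congr UT; ring.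
by rewrite expgS IH utM /ut_mul /=; congr UT; rewrite ?mulrS; ring.
Qed.

Lemma X2_exp n : (X2 ^+ n)%g = UT n%:R 'C(n, 2)%:R 0 n%:R 0 0.
Proof.
elim: n => [|n IH]; first by rewrite expg0 ut1 /ut_one; congr UT; ring.
rewrite expgS IH utM /ut_mul /=; congr UT; rewrite ?mulrS ?binS ?bin1 ?natrD; ring.
Qed.

Lemma Y2_exp n : (Y2 ^+ n)%g = UT 0 0 0 0 0 n%:R.
Proof.
elim: n => [|n IH]; first by rewrite expg0 ut1 /ut_one; congr UT; ring.
by rewrite expgS IH utM /ut_mul /=; congr UT; rewrite ?mulrS; ring.
Qed.

Lemma X1Y1X1 : [~ X1, Y1, X1]%g = 1%g.
Proof. rewrite !ut_commE ut1 /ut_one /X1 /Y1 /X2 /Y2; utsimpl.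
by f_equal; ring. Qed.
Lemma X1Y1Y1 : [~ X1, Y1, Y1]%g = 1%g.
Proof. rewrite !ut_commE ut1 /ut_one /X1 /Y1 /X2 /Y2; utsimpl.
by f_equal; ring. Qed.
Lemma X2Y2X2 : [~ X2, Y2, X2]%g = UT 0 0 (-1) 0 0 0.
Proof. rewrite !ut_commE /ut_one /X1 /Y1 /X2 /Y2; utsimpl.
by f_equal; ring. Qed.
Lemma X2Y2Y2 : [~ X2, Y2, Y2]%g = 1%g.
Proof. rewrite !ut_commE ut1 /ut_one /X1 /Y1 /X2 /Y2; utsimpl.
by f_equal; ring. Qed.

Lemma comm_X1 (p : ut) : commute p X1 -> u23 p = 0.
Proof.
case: p => a b c d e f E.
have E' : ut_mul (UT a b c d e f) X1 = ut_mul X1 (UT a b c d e f) := E.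
move: (congr1 (@u13 R) E'); rewrite /X1 !ut_mulE /= => E2.
have -> : d = (0 + 1 * d + b) - (b + a * 0 + 0) by ring.
by rewrite -E2 subrr.
Qed.

Lemma comm_Y1 (p : ut) : commute p Y1 -> u12 p = 0.
Proof.
case: p => a b c d e f E.
have E' : ut_mul (UT a b c d e f) Y1 = ut_mul Y1 (UT a b c d e f) := E.
move: (congr1 (@u13 R) E'); rewrite /Y1 !ut_mulE /= => E2.
have -> : a = (b + a * 1 + 0) - (0 + 0 * d + b) by ring.
by rewrite E2 subrr.
Qed.

Lemma u12M (p q : ut) : u12 (p * q)%g = u12 p + u12 q. Proof. by []. Qed.
Lemma u23M (p q : ut) : u23 (p * q)%g = u23 p + u23 q. Proof. by []. Qed.

End ModelFacts.

Section Zp.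
Variable M : nat.
Hypothesis M_gt1 : (1 < M)%N.
Local Open Scope ring_scope.
Lemma Zp_eq0 n : ((n%:R : 'Z_M) = 0) <-> (M %| n)%N.
Proof.
split=> [H | /eqP H].
  have := congr1 (@nat_of_ord _) H; rewrite val_Zp_nat //= => E; by rewrite /dvdn E.
by rewrite -Zp_nat_mod // H.
Qed.

End Zp.


Import GRing.Theory.
Local Open Scope group_scope.

Section Gen.
Variable gT : finGroupType.
Implicit Types x y : gT.

Lemma gen_set2 x y : <<[set x; y]>> = <[x]> <*> <[y]>.
Proof. by rewrite joing_idl joing_idr. Qed.

Lemma class2_L4 x y : [~ x, y, x] = 1 -> [~ x, y, y] = 1 -> 'L_4(<<[set x; y]>>) = 1.
Proof.
move=> cx cy; set H := <<[set x; y]>>.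
have cxy : [~ x, y] \in 'C(H).
  rewrite cent_gen; apply/centP => z; rewrite !inE => /orP[]/eqP->; apply/commgP.
    by rewrite cx.
  by rewrite cy.
have dH : H^`(1) = <[[~ x, y]]>.
  by rewrite /H gen_set2; apply: der1_joing_cycles; rewrite -gen_set2.
have L3 : 'L_3(H) = 1.
  rewrite lcnSn lcn2 dH; apply/commG1P.
  by rewrite cycle_subG.
by rewrite lcnSn L3 comm1G.
Qed.

Lemma coset_eq_mem (H : {group gT}) x y : x \in 'N(H) -> y \in 'N(H) ->
  coset H x = coset H y -> x^-1 * y \in H.
Proof.
move=> nx ny E; apply: coset_idr; first by rewrite groupM ?groupV.
rewrite morphM ?groupV // morphV //; change ((coset H x)^-1 * coset H y = 1); by rewrite E mulVg.
Qed.

Lemma commX_gen x y c d n : [~ x, y] = c -> [~ c, x] = d ->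
  commute d x -> commute d c -> [~ x ^+ n, y] = c ^+ n * d ^+ 'C(n, 2).
Proof.
move=> Ec Ed dx dc.
elim: n => [|n IH]; first by rewrite expg0 comm1g !expg0 mulg1.
have dXx k : (d ^+ k) ^ x = d ^+ k.
  by apply/conjg_fixP/commgP; apply: commute_sym; apply: commuteX; apply: commute_sym.
have dXc k : commute (d ^+ k) c by apply: commute_sym; apply: commuteX; apply: commute_sym.
rewrite expgSr commMgJ IH Ec conjMg conjXg conjg_mulR Ed dXx.
rewrite expgMn; last by apply: commute_sym.
rewrite binS bin1 addnC expgD -!mulgA (dXc _) !mulgA.
rewrite -[c ^+ n * d ^+ n * c](mulgA _ _ c) (dXc _) mulgA -expgSr.
by rewrite -!mulgA.
Qed.

Lemma commgX_gen x y c e n : [~ x, y] = c -> [~ c, y] = e ->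
  commute e y -> commute e c -> [~ x, y ^+ n] = c ^+ n * e ^+ 'C(n, 2).
Proof.
move=> Ec Ee ey ec.
elim: n => [|n IH]; first by rewrite expg0 commg1 !expg0 mulg1.
have eXy k : (e ^+ k) ^ y = e ^+ k.
  by apply/conjg_fixP/commgP; apply: commute_sym; apply: commuteX; apply: commute_sym.
have eXc k : commute (e ^+ k) c by apply: commute_sym; apply: commuteX; apply: commute_sym.
rewrite expgSr commgMJ IH Ec conjMg conjXg conjg_mulR Ee eXy.
rewrite expgMn; last by apply: commute_sym.
rewrite binS bin1 addnC expgD !mulgA -expgS.
by rewrite -!mulgA.
Qed.

End Gen.

Definition Zr (n : nat) : finComNzRingType := 'Z_n.

Section Main.
Variables (gT : finGroupType) (G : {group gT}) (a b : gT).
Hypotheses (defG : G :=: <<[set a; b]>>) (L4G : 'L_4(G) = 1).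

Local Notation w := [~ a, b].
Local Notation u := [~ a, b, a].
Local Notation v := [~ a, b, b].

Lemma sabG : [set a; b] \subset G.
Proof. by rewrite defG subset_gen. Qed.
Lemma Ga : a \in G.
Proof. by apply: (subsetP sabG); rewrite !inE eqxx. Qed.
Lemma Gb : b \in G.
Proof. by apply: (subsetP sabG); rewrite !inE eqxx orbT. Qed.
Lemma wL2 : w \in 'L_2(G).
Proof. by rewrite lcnSn mem_commg ?Ga ?Gb. Qed.
Lemma uL3 : u \in 'L_3(G).
Proof. by rewrite lcnSn mem_commg ?wL2 ?Ga. Qed.
Lemma vL3 : v \in 'L_3(G).
Proof. by rewrite lcnSn mem_commg ?wL2 ?Gb. Qed.
Lemma L2G : 'L_2(G) \subset G. Proof. exact: lcn_sub. Qed.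
Lemma L3G : 'L_3(G) \subset G. Proof. exact: lcn_sub. Qed.
Lemma wG : w \in G. Proof. exact: (subsetP L2G _ wL2). Qed.
Lemma uG : u \in G. Proof. exact: (subsetP L3G _ uL3). Qed.
Lemma vG : v \in G. Proof. exact: (subsetP L3G _ vL3). Qed.

Lemma L3C : 'L_3(G) \subset 'C(G).
Proof. by apply/commG1P; rewrite -lcnSn. Qed.

Lemma centL3 z g : z \in 'L_3(G) -> g \in G -> commute z g.
Proof. by move=> zL gG; move/centP: (subsetP L3C z zL); apply. Qed.

Lemma commL3 z g : z \in 'L_3(G) -> g \in G -> [~ z, g] = 1.
Proof. by move=> zL gG; apply/eqP/commgP; apply: centL3. Qed.

Lemma conjL3 z g : z \in 'L_3(G) -> g \in G -> z ^ g = z.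
Proof. by move=> zL gG; apply/conjg_fixP/commgP; apply: centL3. Qed.

Lemma conjbyL3 z g : z \in 'L_3(G) -> g \in G -> g ^ z = g.
Proof. by move=> zL gG; apply/conjg_fixP/commgP/commute_sym; apply: centL3. Qed.

Lemma commXa n : [~ a ^+ n, b] = w ^+ n * u ^+ 'C(n, 2).
Proof.
apply: commX_gen => //; last by apply: centL3 uL3 wG.
by apply: centL3 uL3 Ga.
Qed.

Lemma commbX n : [~ a, b ^+ n] = w ^+ n * v ^+ 'C(n, 2).
Proof.
apply: commgX_gen => //; last by apply: centL3 vL3 wG.
by apply: centL3 vL3 Gb.
Qed.

Lemma quo_gen (K : {group gT}) :
  G \subset 'N(K) -> G / K = <[coset K a]> <*> <[coset K b]>.
Proof.
move=> nKG; rewrite -gen_set2 {1}defG quotient_gen ?(subset_trans sabG) //.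
by rewrite quotientU !quotient_set1 // (subsetP nKG) ?Ga ?Gb.
Qed.

Lemma decompG g : g \in G ->
  exists i j c, c \in 'L_2(G) /\ g = a ^+ i * b ^+ j * c.
Proof.
move=> gG; set D := 'L_2(G).
have nDG : G \subset 'N(D) := lcn_norm 2 G.
have abQ : abelian (G / D) by rewrite /D lcn2; apply: (der_abelian 0 G).
have QG := quo_gen nDG.
have sAQ : <[coset D a]> \subset G / D by rewrite QG joing_subl.
have sBQ : <[coset D b]> \subset G / D by rewrite QG joing_subr.
have : coset D g \in G / D := mem_quotient D gG.
rewrite QG cent_joinEl; last first.
  by apply: subset_trans sAQ _; apply: sub_abelian_cent.
case/mulsgP=> x y /cycleP[i ->] /cycleP[j ->] E.
have nD z : z \in G -> z \in 'N(D) := subsetP nDG z.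
set h := a ^+ i * b ^+ j.
have hG : h \in G by rewrite groupM ?groupX ?Ga ?Gb.
have Eh : coset D h = coset D g.
  by rewrite E morphM ?morphX ?groupX ?nD ?Ga ?Gb.
exists i, j, (h^-1 * g); split; last by rewrite mulKVg.
exact: coset_eq_mem (nD _ hG) (nD _ gG) Eh.
Qed.

Lemma decompL2 c : c \in 'L_2(G) ->
  exists k l, l \in 'L_3(G) /\ c = w ^+ k * l.
Proof.
move=> cL; set L := 'L_3(G).
have nLG : G \subset 'N(L) := lcn_norm 3 G.
have nL z : z \in G -> z \in 'N(L) := subsetP nLG z.
have QG := quo_gen nLG.
have wc : [~ coset L a, coset L b] \in 'C(<[coset L a]> <*> <[coset L b]>).
  rewrite -QG -morphR ?nL ?Ga ?Gb //.
  have := subsetP (lcn_central 2 G) _ (mem_quotient L wL2).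
  by case/setIP.
have dQ := der1_joing_cycles wc.
have : coset L c \in (G / L)^`(1).
  by rewrite -quotient_der // mem_quotient.
rewrite QG dQ -morphR ?nL ?Ga ?Gb // => /cycleP[k Ek].
exists k, ((w ^+ k)^-1 * c); split; last by rewrite mulKVg.
apply: coset_eq_mem; rewrite ?nL ?groupX ?wG ?(subsetP L2G) //.
by rewrite Ek morphX ?nL ?wG.
Qed.

Lemma L3gen : 'L_3(G) \subset <<[set u; v]>>.
Proof.
have wL3 x : x \in G -> [~ w, x] \in 'L_3(G).
  by move=> xG; rewrite lcnSn mem_commg ?wL2.
have phiM : {in G &, {morph (fun g => [~ w, g]) : x y / x * y}}.
  move=> x y xG yG /=; rewrite commgMJ (conjL3 (wL3 x xG) yG).
  by rewrite (centL3 (wL3 x xG)) // groupR ?wG.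
pose phi := Morphism phiM.
have phiG : phi @* G = <<[set u; v]>>.
  have -> : phi @* G = phi @* <<[set a; b]>> by rewrite -defG.
  rewrite morphim_gen -?defG ?sabG // morphimU !morphim_set1 ?Ga ?Gb //.
rewrite lcnSn /commutator gen_subG; apply/subsetP=> _ /imset2P[c g cL gG ->].
have [k [l [lL ->]]] := decompL2 cL.
rewrite commMgJ (commL3 lL gG) mulg1.
rewrite (conjbyL3 lL (groupR (groupX k wG) gG)).
rewrite commXg; last by apply: commute_sym; apply: centL3 (wL3 g gG) wG.
rewrite groupX //; have := mem_morphim phi gG gG; rewrite phiG; exact.
Qed.

Lemma morph_w (hT : finGroupType) (f : {morphism G >-> hT}) : f w = [~ f a, f b].
Proof. by rewrite morphR ?Ga ?Gb. Qed.
Lemma morph_u (hT : finGroupType) (f : {morphism G >-> hT}) : f u = [~ f a, f b, f a].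
Proof. by rewrite morphR ?wG ?Ga // morph_w. Qed.
Lemma morph_v (hT : finGroupType) (f : {morphism G >-> hT}) : f v = [~ f a, f b, f b].
Proof. by rewrite morphR ?wG ?Gb // morph_w. Qed.

Variables (alpha beta gamma : nat).
Hypotheses (hab : (beta <= alpha)%N) (hb : (1 <= beta)%N) (hg : (1 <= gamma)%N)
  (hgb : (gamma < beta)%N).
Hypotheses (aX : a ^+ (2 ^ alpha)%N = 1) (bX : b ^+ (2 ^ beta)%N = 1).
Hypothesis univ : forall (hT : finGroupType) (x y : hT),
  'L_4(<<[set x; y]>>) = 1 -> x ^+ (2 ^ alpha)%N = 1 -> y ^+ (2 ^ beta)%N = 1 ->
  exists f : {morphism G >-> hT}, f a = x /\ f b = y.

Local Notation N := <<[set u ^+ (2 ^ gamma)%N; v ^+ (2 ^ gamma)%N]>>%G.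

Lemma NL3 : N \subset 'L_3(G).
Proof.
rewrite gen_subG; apply/subsetP=> z; rewrite !inE => /orP[]/eqP->.
  by rewrite groupX ?uL3.
by rewrite groupX ?vL3.
Qed.
Lemma NG : N \subset G. Proof. exact: subset_trans NL3 L3G. Qed.
Lemma nNG : G \subset 'N(N).
Proof. by apply: cents_norm; rewrite centsC; apply: subset_trans NL3 L3C. Qed.
Lemma nsNG : N <| G. Proof. by rewrite /normal NG nNG. Qed.

Lemma Zcrit g : g \in G ->
  (coset N g \in 'Z(G / N)) = ([~ g, a] \in N) && ([~ g, b] \in N).
Proof.
move=> gG; have nN x : x \in G -> x \in 'N(N) := subsetP nNG x.
have cosR x : x \in G -> coset N [~ g, x] = [~ coset N g, coset N x].
  by move=> xG; rewrite morphR ?nN.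
have inN x : x \in G -> ([~ g, x] \in N) = ([~ coset N g, coset N x] == 1).
  move=> xG; rewrite -cosR //; apply/idP/eqP => [H|H]; first exact: coset_id.
  by apply: coset_idr; rewrite ?groupR ?nN.
rewrite !inN ?Ga ?Gb //; apply/idP/andP=> [|[ca cb]].
  case/setIP=> _ /centP cz.
  by split; apply/commgP; apply: cz; apply: mem_quotient; rewrite ?Ga ?Gb.
apply/setIP; split; first exact: mem_quotient.
rewrite quo_gen ?nNG // -gen_set2 cent_gen; apply/centP=> z.
by rewrite !inE => /orP[]/eqP->; apply/commgP.
Qed.

Lemma C2_div n m : (m < n)%N -> (2 ^ m %| 'C(2 ^ n, 2))%N.
Proof.
case: n => // n ltmn.
rewrite bin2 expnS mul2n -doubleMl doubleK.
by apply: dvdn_mulr; apply: dvdn_exp2l; rewrite -ltnS.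
Qed.

Lemma powN z n : z \in [set u; v] -> (2 ^ gamma %| n)%N -> z ^+ n \in N.
Proof.
move=> zS /divnK <-; rewrite mulnC expgM groupX // mem_gen //.
by case/set2P: zS => ->; rewrite !inE eqxx ?orbT.
Qed.

Lemma N_ker (hT : finGroupType) (f : {morphism G >-> hT}) :
  f u ^+ (2 ^ gamma)%N = 1 -> f v ^+ (2 ^ gamma)%N = 1 -> N \subset 'ker f.
Proof.
move=> fu fv; rewrite gen_subG; apply/subsetP=> z /set2P[]->.
  by apply/kerP; rewrite ?groupX ?uG // morphX ?uG.
by apply/kerP; rewrite ?groupX ?vG // morphX ?vG.
Qed.

Local Notation Hs := <<[set coset N (a ^+ (2 ^ beta)%N); coset N (w ^+ (2 ^ gamma)%N);
                     coset N u; coset N v]>>.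

Lemma Ew : w ^+ (2 ^ beta)%N = (v ^+ 'C(2 ^ beta, 2))^-1.
Proof.
have := commbX (2 ^ beta); rewrite bX commg1 => /esym E.
by apply/eqP; rewrite eq_mulgV1 invgK E.
Qed.

Lemma Zsup : Hs \subset 'Z(G / N).
Proof.
have uvS : u \in [set u; v] by rewrite !inE eqxx.
have vvS : v \in [set u; v] by rewrite !inE eqxx orbT.
rewrite gen_subG; apply/subsetP=> z Hz; rewrite !inE in Hz.
case/orP: Hz => [/orP[/orP[/eqP->|/eqP->]|/eqP->]|/eqP->].
- rewrite Zcrit ?groupX ?Ga //; apply/andP; split.
    have -> : [~ a ^+ (2 ^ beta), a] = 1.
      by apply/eqP/commgP; apply: commute_sym; apply: commuteX.
    exact: group1.
  rewrite commXa Ew groupM ?groupV //; apply: powN => //; exact: C2_div.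
- rewrite Zcrit ?groupX ?wG //; apply/andP; split.
    rewrite commXg; first by apply: powN.
    by apply: commute_sym; apply: centL3 uL3 wG.
  rewrite commXg; first by apply: powN.
  by apply: commute_sym; apply: centL3 vL3 wG.
- by rewrite Zcrit ?uG // (commL3 uL3 Ga) (commL3 uL3 Gb) group1.
by rewrite Zcrit ?vG // (commL3 vL3 Ga) (commL3 vL3 Gb) group1.
Qed.

Lemma key g : g \in G -> [~ g, a] \in N -> [~ g, b] \in N -> g \in coset N @*^-1 Hs.
Proof.
move=> gG ga gb.
have nN x : x \in G -> x \in 'N(N) := subsetP nNG x.
have inP x : x \in G -> coset N x \in Hs -> x \in coset N @*^-1 Hs.
  by move=> xG; apply: mem_morphpre; apply: nN.
have Pa : a ^+ (2 ^ beta) \in coset N @*^-1 Hs.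
  by apply: inP; rewrite ?groupX ?Ga // mem_gen // !inE eqxx.
have Pw : w ^+ (2 ^ gamma) \in coset N @*^-1 Hs.
  by apply: inP; rewrite ?groupX ?wG // mem_gen // !inE eqxx ?orbT.
have PL3 : 'L_3(G) \subset coset N @*^-1 Hs.
  apply: subset_trans L3gen _; rewrite gen_subG; apply/subsetP=> z /set2P[]->.
    by apply: inP; rewrite ?uG // mem_gen // !inE eqxx ?orbT.
  by apply: inP; rewrite ?vG // mem_gen // !inE eqxx ?orbT.
have [i [j [c [cL Eg]]]] := decompG gG.
rewrite Eg in gG ga gb *.
have cG : c \in G := subsetP L2G c cL.
have M1 : (1 < 2 ^ beta)%N by rewrite -{1}(expn0 2) ltn_exp2l.
have X1p : X1 (Zr (2 ^ beta)) ^+ (2 ^ alpha) = 1.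
  by rewrite X1_exp ((Zp_eq0 M1 _).2 (dvdn_exp2l 2 hab)).
have Y1p : Y1 (Zr (2 ^ beta)) ^+ (2 ^ beta) = 1.
  by rewrite Y1_exp ((Zp_eq0 M1 _).2 (dvdnn _)).
have [f1 [f1a f1b]] := univ (ut_L4 _) X1p Y1p.
have Nk1 : N \subset 'ker f1.
  by apply: N_ker; rewrite ?morph_u ?morph_v f1a f1b ?X1Y1X1 ?X1Y1Y1 expg1n.
have f1g : f1 (a ^+ i * b ^+ j * c) = X1 _ ^+ i * Y1 _ ^+ j * f1 c.
  by rewrite !morphM ?groupM ?groupX ?Ga ?Gb // !morphX ?Ga ?Gb // f1a f1b.
have f1c : f1 c \in D2G _.
  have := mem_morphim f1 cG cL; rewrite morphim_lcn //.
  by move/(subsetP (ut_L2 _)).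
move: f1c; rewrite inE => /and3P[/eqP h12 /eqP h23 _].
have cb1 : commute (f1 (a ^+ i * b ^+ j * c)) (Y1 _).
  have := mker (subsetP Nk1 _ gb); rewrite morphR ?Gb // f1b.
  by move/eqP/commgP.
have ca1 : commute (f1 (a ^+ i * b ^+ j * c)) (X1 _).
  have := mker (subsetP Nk1 _ ga); rewrite morphR ?Ga // f1a.
  by move/eqP/commgP.
have Hi : (2 ^ beta %| i)%N.
  apply/(Zp_eq0 M1 i).1.
  by have := comm_Y1 cb1; rewrite f1g !u12M X1_exp Y1_exp h12 /= !addr0.
have Hj : (2 ^ beta %| j)%N.
  apply/(Zp_eq0 M1 j).1.
  by have := comm_X1 ca1; rewrite f1g !u23M X1_exp Y1_exp h23 /= add0r addr0.
have bj1 : b ^+ j = 1 by rewrite -(divnK Hj) mulnC expgM bX expg1n.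
rewrite bj1 mulg1 in ga *.
have [k [l [lL Ec]]] := decompL2 cL; rewrite Ec in ga *.
have Eu : [~ a ^+ i * (w ^+ k * l), a] = u ^+ k.
  rewrite commMgJ.
  have -> : [~ a ^+ i, a] = 1.
    by apply/eqP/commgP; apply: commute_sym; apply: commuteX.
  rewrite conj1g mul1g commMgJ (commL3 lL Ga) mulg1.
  rewrite (conjbyL3 lL (groupR (groupX k wG) Ga)).
  rewrite commXg //; apply: commute_sym; apply: centL3 uL3 wG.
rewrite Eu in ga.
have M2 : (1 < 2 ^ gamma)%N by rewrite -{1}(expn0 2) ltn_exp2l.
have hga : (gamma < alpha)%N := leq_trans hgb hab.
have X2p : X2 (Zr (2 ^ gamma)) ^+ (2 ^ alpha) = 1.
  rewrite X2_exp ((Zp_eq0 M2 _).2 (dvdn_exp2l 2 (ltnW hga))).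
  by rewrite ((Zp_eq0 M2 _).2 (C2_div hga)).
have Y2p : Y2 (Zr (2 ^ gamma)) ^+ (2 ^ beta) = 1.
  by rewrite Y2_exp ((Zp_eq0 M2 _).2 (dvdn_exp2l 2 (ltnW hgb))).
have [f2 [f2a f2b]] := univ (ut_L4 _) X2p Y2p.
have U2D3 : (UT 0%R 0%R (-1)%R 0%R 0%R 0%R : ut (Zr (2 ^ gamma))) \in D3 _.
  by rewrite !inE /= !eqxx.
have f2u : f2 u = UT 0%R 0%R (-1)%R 0%R 0%R 0%R by rewrite morph_u f2a f2b X2Y2X2.
have Nk2 : N \subset 'ker f2.
  apply: N_ker; last by rewrite morph_v f2a f2b X2Y2Y2 expg1n.
  by rewrite f2u ut_expg // ((Zp_eq0 M2 _).2 (dvdnn _)) mul0r.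
have := mker (subsetP Nk2 _ ga); rewrite morphX ?uG // f2u ut_expg //.
move/(congr1 (@u14 _)) => /= Ek.
have Hk : (2 ^ gamma %| k)%N.
  by apply/(Zp_eq0 M2 k).1; apply/eqP; rewrite -oppr_eq0 -mulrN1 Ek.
rewrite mulgA; apply: groupM; last exact: (subsetP PL3).
apply: groupM.
  by rewrite -(divnK Hi) mulnC expgM groupX.
by rewrite -(divnK Hk) mulnC expgM groupX.
Qed.

Lemma Zeq : 'Z(G / N) = Hs.
Proof.
apply/eqP; rewrite eqEsubset Zsup andbT.
apply/subsetP=> z zZ; have := subsetP (center_sub _) _ zZ.
case/morphimP=> g nNg gG Ez; rewrite Ez in zZ *.
move: zZ; rewrite Zcrit // => /andP[ga gb].
by have /morphpreP[] := key gG ga gb.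
Qed.

Local Notation M := (coset N @*^-1 'Z(G / N))%G.

Lemma nsMG : M <| G.
Proof.
have E := cosetpre_normal 'Z(G / N) (G / N).
by rewrite (quotientGK nsNG) center_normal in E; rewrite E.
Qed.

Lemma iso2 : (G / N) / 'Z(G / N) \isog G / M.
Proof.
have sNM : N \subset M by rewrite -{1}(ker_coset N) ker_sub_pre.
have EZ : M / N = 'Z(G / N).
  by apply: morphpreK; apply: subset_trans (center_sub _) (quotientS _ nNG).
by have := third_isog sNM nsNG nsMG; rewrite EZ.
Qed.

Lemma inM x : x \in G -> coset N x \in Hs -> x \in M.
Proof.
by move=> xG; rewrite /= Zeq; apply: mem_morphpre; apply: (subsetP nNG).
Qed.

Lemma presG : G / M \isog Grp (x : y : (x ^+ (2 ^ beta)%N, y ^+ (2 ^ beta)%N,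
                     [~ x, y] ^+ (2 ^ gamma)%N, [~ x, y, x], [~ x, y, y])).
Proof.
have nMG : G \subset 'N(M) := normal_norm nsMG.
have nM x : x \in G -> x \in 'N(M) := subsetP nMG x.
have aM : a ^+ (2 ^ beta) \in M.
  by apply: inM; rewrite ?groupX ?Ga // mem_gen // !inE eqxx.
have wM : w ^+ (2 ^ gamma) \in M.
  by apply: inM; rewrite ?groupX ?wG // mem_gen // !inE eqxx ?orbT.
have uM : u \in M.
  by apply: inM; rewrite ?uG // mem_gen // !inE eqxx ?orbT.
have vM : v \in M.
  by apply: inM; rewrite ?vG // mem_gen // !inE eqxx ?orbT.
apply: intro_isoGrp.
  apply/existsP; exists (coset M a, coset M b); rewrite /= !xpair_eqE.
  have e1 : <[coset M a]> <*> <[coset M b]> = G / M by rewrite -quo_gen.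
  have e2 : coset M a ^+ (2 ^ beta) = 1 by rewrite -morphX ?nM ?Ga //; apply: coset_id.
  have e3 : coset M b ^+ (2 ^ beta) = 1 by rewrite -morphX ?nM ?Gb // bX morph1.
  have e4 : [~ coset M a, coset M b] ^+ (2 ^ gamma) = 1.
    by rewrite -morphR ?nM ?Ga ?Gb // -morphX ?nM ?wG //; apply: coset_id.
  have e5 : [~ coset M a, coset M b, coset M a] = 1.
    by rewrite -morphR ?nM ?Ga ?Gb // -morphR ?nM ?Ga ?wG //; apply: coset_id.
  have e6 : [~ coset M a, coset M b, coset M b] = 1.
    by rewrite -morphR ?nM ?Ga ?Gb // -morphR ?nM ?Gb ?wG //; apply: coset_id.
  by rewrite e1 e2 e3 e4 e5 e6 !eqxx.
move=> rT H /existsP[[x y]] /=; rewrite !xpair_eqE.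
case/and5P=> /eqP defH /eqP xX /eqP yX /eqP wX /andP[/eqP ux /eqP vy].
have L4 := class2_L4 ux vy.
have xA : x ^+ (2 ^ alpha) = 1.
  have -> : (2 ^ alpha = 2 ^ beta * 2 ^ (alpha - beta))%N by rewrite -expnD subnKC.
  by rewrite expgM xX expg1n.
have [f [fa fb]] := univ L4 xA yX.
have fG : f @* G = H.
  have -> : f @* G = f @* <<[set a; b]>> by rewrite -defG.
  rewrite morphim_gen -?defG ?sabG // morphimU !morphim_set1 ?Ga ?Gb // fa fb.
  by rewrite -defH gen_set2.
have sNK : 'ker (coset N) \subset 'ker f.
  rewrite ker_coset; apply: N_ker.
    by rewrite morph_u fa fb ux expg1n.
  by rewrite morph_v fa fb vy expg1n.
pose fN := factm sNK nNG.
have ZK : 'Z(G / N) \subset 'ker fN.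
  rewrite Zeq gen_subG; apply/subsetP=> z Hz; rewrite !inE in Hz.
  case/orP: Hz => [/orP[/orP[/eqP->|/eqP->]|/eqP->]|/eqP->]; apply/kerP.
  - by rewrite mem_quotient ?groupX ?Ga.
  - by apply: etrans (factmE sNK nNG (groupX _ Ga)) _; rewrite morphX ?Ga // fa xX.
  - by rewrite mem_quotient ?groupX ?wG.
  - by apply: etrans (factmE sNK nNG (groupX _ wG)) _; rewrite morphX ?wG // morph_w fa fb wX.
  - by rewrite mem_quotient ?uG.
  - by apply: etrans (factmE sNK nNG uG) _; rewrite morph_u fa fb ux.
  - by rewrite mem_quotient ?vG.
  - by apply: etrans (factmE sNK nNG vG) _; rewrite morph_v fa fb vy.
have MK : M \subset 'ker f.
  apply/subsetP=> g gM; have gG := subsetP (normal_sub nsMG) g gM.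
  move/morphpreP: gM => [nNg gZ].
  apply/kerP => //; apply: etrans (esym (factmE sNK nNG gG)) _.
  exact: mker (subsetP ZK _ gZ).
have sMK : 'ker (coset M) \subset 'ker f by rewrite ker_coset.
apply/homgP; exists (factm sMK nMG).
by rewrite morphim_factm fG.
Qed.

End Main.

Theorem corollary5p5 (gT : finGroupType) (G : {group gT}) (a b : gT)
    (alpha beta gamma : nat) :
  (alpha >= beta)%N -> (beta >= 1)%N ->
  nil3_product G a b (2 ^ alpha)%N (2 ^ beta)%N ->
  (1 <= gamma)%N -> (gamma < beta)%N ->
  let N := <<[set [~ a, b, a] ^+ (2 ^ gamma)%N; [~ a, b, b] ^+ (2 ^ gamma)%N]>>%G in
  'Z(G / N) = <<[set coset N (a ^+ (2 ^ beta)%N);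
                     coset N ([~ a, b] ^+ (2 ^ gamma)%N);
                     coset N [~ a, b, a];
                     coset N [~ a, b, b]]>>
  /\ (G / N) / 'Z(G / N) \isog
       Grp (x : y : (x ^+ (2 ^ beta)%N, y ^+ (2 ^ beta)%N,
                     [~ x, y] ^+ (2 ^ gamma)%N, [~ x, y, x], [~ x, y, y])).
Proof.
move=> hab hb [defG aX bX L4G univ] hg hgb N; rewrite /N.
split; first by eapply Zeq; eauto.
eapply isoGrp_trans; first by eapply iso2; eauto.
by eapply presG; eauto.
Qed.
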